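(* The area of the cusp triangle $T'=P_1'P_2'P_3'$ equals $\dfrac{27\sqrt3}{16}\,\dfrac{c^4}{ab}$, independent of $u$.
   Context: Let $a>b>0$ and $c>0$ with $c^2=a^2-b^2$. Let $\mathcal{E}$ be the ellipse $x^2/a^2+y^2/b^2=1$, parametrized by $P(t)=(a\cos t,b\sin t)$. Fix $u\in\mathbb{R}$ and let $M=(a\cos u,b\sin u)$. Let $\Delta_u(t)=(x_u(t),y_u(t))$, where $x_u(t)=\frac1a\big(c^2(1+\cos(t+u))\cos t-a^2\cos u\big)$ and $y_u(t)=\frac1b\big(c^2\cos t\sin(t+u)-c^2\sin t-a^2\sin u\big)$ (the negative pedal curve of $\mathcal{E}$ with respect to $M$). For $i=1,2,3$ let $t_i=-u/3-2\pi(i-1)/3$ and $P_i'=\Delta_u(t_i)$ (the cusps of $\Delta_u$). *)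

(* Defs.v *)
From Stdlib Require Import Reals Lra.
Open Scope R_scope.

(* Negative pedal curve Delta_u(t) of the ellipse x^2/a^2+y^2/b^2=1 w.r.t.
   M = (a cos u, b sin u), with c^2 = a^2 - b^2. *)
Definition delta_x (a c u t : R) : R :=
  / a * (c ^ 2 * (1 + cos (t + u)) * cos t - a ^ 2 * cos u).
Definition delta_y (a b c u t : R) : R :=
  / b * (c ^ 2 * cos t * sin (t + u) - c ^ 2 * sin t - a ^ 2 * sin u).

Definition cusp_t (u : R) (i : nat) : R :=
  - u / 3 - 2 * PI * (INR i - 1) / 3.

Definition triangle_area (x1 y1 x2 y2 x3 y3 : R) : R :=
  Rabs ((x2 - x1) * (y3 - y1) - (x3 - x1) * (y2 - y1)) / 2.

(* Main.v *)
Require Import Defs.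
From Stdlib Require Import Reals.
From Stdlib Require Import Lra Nsatz.
Open Scope R_scope.

Lemma key_trig (th u : R) (n : nat) : 3 * th + u = - (2 * INR n * PI) ->
  (1 + cos (th + u)) * cos th = 3/2 * cos th + cos u / 2 /\
  cos th * sin (th + u) - sin th = - (3/2) * sin th + sin u / 2.
Proof.
  intro H.
  assert (HA : - th = (2 * th + u) + 2 * INR n * PI) by lra.
  assert (Hc : cos (2*th+u) = cos th).
  { rewrite <- (cos_period (2*th+u) n), <- HA, cos_neg. reflexivity. }
  assert (Hs : sin (2*th+u) = - sin th).
  { rewrite <- (sin_period (2*th+u) n), <- HA, sin_neg. reflexivity. }
  assert (E1 : th + u = (2*th+u) - th) by ring.
  assert (E2 : u = (2*th+u) - (th + th)) by ring.
  rewrite E1. remember (2*th+u) as A. rewrite E2.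
  rewrite !cos_minus, !sin_minus, cos_plus, sin_plus, Hc, Hs.
  pose proof (sin2_cos2 th). unfold Rsqr in H0.
  pose proof (f_equal (fun z => z * cos th) H0). pose proof (f_equal (fun z => z * sin th) H0). simpl in *. split; nra.
Qed.

Theorem proposition4p1 (a b c u : R) :
  a > b -> b > 0 -> c > 0 -> c ^ 2 = a ^ 2 - b ^ 2 ->
  triangle_area
    (delta_x a c u (cusp_t u 1)) (delta_y a b c u (cusp_t u 1))
    (delta_x a c u (cusp_t u 2)) (delta_y a b c u (cusp_t u 2))
    (delta_x a c u (cusp_t u 3)) (delta_y a b c u (cusp_t u 3))
  = 27 * sqrt 3 / 16 * (c ^ 4 / (a * b)).
Proof.
  intros Hab Hb Hc Hc2.
  assert (Ha : a > 0) by lra.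
  set (s := - u / 3).
  assert (T1 : cusp_t u 1 = s) by (unfold cusp_t, s; simpl; field).
  assert (T2 : cusp_t u 2 = s - 2 * (PI/3)) by (unfold cusp_t, s; simpl; field).
  assert (T3 : cusp_t u 3 + 2 * INR 1 * PI = s + 2 * (PI/3))
    by (unfold cusp_t, s; simpl; field).
  assert (K : forall n : nat, 3 * cusp_t u n + u = - (2 * INR (n - 1) * PI) ->
    delta_x a c u (cusp_t u n) = (c^2 * (3/2 * cos (cusp_t u n) + cos u / 2) - a^2 * cos u) / a /\
    delta_y a b c u (cusp_t u n) = (c^2 * (- (3/2) * sin (cusp_t u n) + sin u / 2) - a^2 * sin u) / b).
  { intros n Hn. destruct (key_trig _ _ _ Hn) as [E F].
    unfold delta_x, delta_y. rewrite <- E, <- F. split; field; lra. }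
  destruct (K 1%nat) as [X1 Y1]. { unfold cusp_t; simpl; field. }
  destruct (K 2%nat) as [X2 Y2]. { unfold cusp_t; simpl; field. }
  destruct (K 3%nat) as [X3 Y3]. { unfold cusp_t; simpl; field. }
  rewrite X1, Y1, X2, Y2, X3, Y3.
  assert (C3 : cos (cusp_t u 3) = cos (s + 2*(PI/3)))
    by (rewrite <- T3, cos_period; reflexivity).
  assert (S3 : sin (cusp_t u 3) = sin (s + 2*(PI/3)))
    by (rewrite <- T3, sin_period; reflexivity).
  rewrite C3, S3, T1, T2, cos_plus, sin_plus, cos_minus, sin_minus, cos_2PI3, sin_2PI3.
  pose proof (sin2_cos2 s) as P. unfold Rsqr in P.
  pose proof (sqrt_sqrt 3) as R3.
  assert (R0 : 0 < sqrt 3) by (apply sqrt_lt_R0; lra).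
  unfold triangle_area.
  set (r := sqrt 3) in *. set (C := cos s) in *. set (S := sin s) in *.
  match goal with |- Rabs ?e / 2 = _ => assert (HE : e = 27/8 * r * (c^4/(a*b))) end.
  { apply Rmult_eq_reg_r with (a*b); [| nra].
    field_simplify; [| lra | lra ]. 
    assert (HS : S^2 = 1 - C^2) by (simpl; lra). rewrite HS. field. }
  rewrite HE, Rabs_right.
  - field. lra.
  - apply Rle_ge. assert (0 < c^4/(a*b)).
    { apply Rdiv_lt_0_compat; [apply pow_lt; lra | nra]. } nra.
Qed.
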